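(* Let $I\subset(0,\infty)$ be the set of Mina margins of all positive ABMN solutions. Then: (1) there is $\lambda\in(0,1]$ with $I=[\lambda,\lambda^{-1}]$; (2) for $(m_{-\infty},m_\infty,n_{-\infty},n_\infty)\in\mathbb{R}^4$, a positive ABMN solution with this boundary data exists if and only if $m_{-\infty}<m_\infty$, $n_\infty<n_{-\infty}$ and $\frac{n_{-\infty}-n_\infty}{m_\infty-m_{-\infty}}\in[\lambda,\lambda^{-1}]$; (3) $\lambda\le 0.999904$.
   Context: The ABMN system on $\mathbb{Z}$ is the following set of equations in real variables $a_i,b_i,m_i,n_i$ ($i\in\mathbb{Z}$), with $a_i,b_i\ge 0$ always assumed: for every $i\in\mathbb{Z}$, $(a_i+b_i)(m_i+a_i)=a_im_{i+1}+b_im_{i-1}$; $(a_i+b_i)(n_i+b_i)=a_in_{i+1}+b_in_{i-1}$; $(a_i+b_i)^2=b_i(m_{i+1}-m_{i-1})$; $(a_i+b_i)^2=a_i(n_{i-1}-n_{i+1})$. A solution is positive if $a_i>0$ and $b_i>0$ for all $i$. Its boundary data is $(m_{-\infty},m_\infty,n_{-\infty},n_\infty)$, the limits $\lim_{k\to\infty}m_{-k}$, $\lim_{k\to\infty}m_k$, $\lim_{k\to\infty}n_{-k}$, $\lim_{k\to\infty}n_k$; for positive solutions these exist and are real, with $m_{-\infty}<m_\infty$, $n_\infty<n_{-\infty}$. Its Mina margin is $\frac{n_{-\infty}-n_\infty}{m_\infty-m_{-\infty}}$. *)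

(* Defs.v *)
From Stdlib Require Import Reals ZArith.
From Coquelicot Require Import Coquelicot.
Open Scope R_scope.

Definition ABMN_solution (a b m n : Z -> R) : Prop :=
  forall i : Z,
    0 <= a i /\ 0 <= b i /\
    (a i + b i) * (m i + a i) = a i * m (i + 1)%Z + b i * m (i - 1)%Z /\
    (a i + b i) * (n i + b i) = a i * n (i + 1)%Z + b i * n (i - 1)%Z /\
    (a i + b i) ^ 2 = b i * (m (i + 1)%Z - m (i - 1)%Z) /\
    (a i + b i) ^ 2 = a i * (n (i - 1)%Z - n (i + 1)%Z).

Definition positive_ABMN_solution (a b m n : Z -> R) : Prop :=
  ABMN_solution a b m n /\ forall i : Z, 0 < a i /\ 0 < b i.

Definition lim_plus (u : Z -> R) (l : R) : Prop :=
  is_lim_seq (fun k : nat => u (Z.of_nat k)) (Finite l).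
Definition lim_minus (u : Z -> R) (l : R) : Prop :=
  is_lim_seq (fun k : nat => u (- Z.of_nat k)%Z) (Finite l).

Definition has_boundary_data (m n : Z -> R) (mL mR nL nR : R) : Prop :=
  lim_minus m mL /\ lim_plus m mR /\ lim_minus n nL /\ lim_plus n nR.

Definition mina_margin (mL mR nL nR : R) : R := (nL - nR) / (mR - mL).

Definition realizable (mL mR nL nR : R) : Prop :=
  exists a b m n : Z -> R,
    positive_ABMN_solution a b m n /\ has_boundary_data m n mL mR nL nR.

Definition mina_margins (x : R) : Prop :=
  exists mL mR nL nR : R, realizable mL mR nL nR /\ x = mina_margin mL mR nL nR.

(* Main.v *)
Require Import Defs.
From Stdlib Require Import Reals ZArith Lra Lia Psatz Classical.
From Coquelicot Require Import Coquelicot.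
Open Scope R_scope.

Ltac pos := repeat (match goal with
  | |- 0 < _ * _ => apply Rmult_lt_0_compat
  | |- 0 < _ / _ => apply Rdiv_lt_0_compat
  | |- 0 < _ + _ => apply Rplus_lt_0_compat
  | |- _ <> 0 => apply Rgt_not_eq
  | |- _ > 0 => unfold Rgt
  end); try assumption; try lra.

Ltac fld := field; repeat split; try lra; try nra.

Definition step (p q u v : R) : Prop := u^2 = v*(2*p+q) /\ p*(u+2*v) = q^2.

Definition phic (p q : R) : R := p*(2*p+q)/(q*q).
Definition phix (p q : R) : R :=
  let c := phic p q in (c + sqrt (c*c + 8*c))/2.
Definition phi (pq : R*R) : R*R :=
  let (p,q) := pq in let x := phix p q in ((2*p+q)/x, (2*p+q)/(x*x)).

Lemma phic_pos p q : 0 < p -> 0 < q -> 0 < phic p q.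
Proof. intros; unfold phic; apply Rdiv_lt_0_compat; nra. Qed.

Lemma phix_spec p q : 0 < p -> 0 < q ->
  0 < phix p q /\ phix p q * phix p q = phic p q * (phix p q + 2) /\ phic p q < phix p q.
Proof.
  intros hp hq. pose proof (phic_pos p q hp hq) as hc.
  unfold phix. set (c := phic p q) in *.
  assert (hs0 : 0 <= c*c+8*c) by nra.
  pose proof (sqrt_sqrt _ hs0) as hs. pose proof (sqrt_pos (c*c+8*c)) as hsp.
  set (s := sqrt (c*c+8*c)) in *.
  assert (c < s) by nra.
  split; [lra|split; nra].
Qed.

Lemma quad_unique c y z : 0 < c -> 0 < y -> 0 < z ->
  y*y = c*(y+2) -> z*z = c*(z+2) -> y = z.
Proof. intros. assert (c < y) by nra. assert (c < z) by nra. nra. Qed.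

Lemma phi_pos p q : 0 < p -> 0 < q -> 0 < fst (phi (p,q)) /\ 0 < snd (phi (p,q)).
Proof.
  intros hp hq. destruct (phix_spec p q hp hq) as [hx _]. simpl.
  split; apply Rdiv_lt_0_compat; nra.
Qed.

Lemma phi_step p q : 0 < p -> 0 < q -> step p q (fst (phi (p,q))) (snd (phi (p,q))).
Proof.
  intros hp hq. destruct (phix_spec p q hp hq) as [hx [hxx hcx]].
  simpl. set (x := phix p q) in *. unfold phic in hxx.
  unfold step. split.
  - field. nra.
  - assert (hq2 : q*q <> 0) by nra.
    assert (H : x*x*(q*q) = p*(2*p+q)*(x+2)).
    { rewrite hxx. field. lra. }
    apply Rmult_eq_reg_r with (x*x); [|pos].
    replace (p * ((2 * p + q) / x + 2 * ((2 * p + q) / (x * x))) * (x*x))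
      with (p*(2*p+q)*(x+2)) by fld.
    rewrite <- H. ring.
Qed.

Lemma step_unique p q u v : 0 < p -> 0 < q -> 0 < u -> 0 < v -> step p q u v ->
  u = fst (phi (p,q)) /\ v = snd (phi (p,q)).
Proof.
  intros hp hq hu hv [h1 h2].
  destruct (phix_spec p q hp hq) as [hx [hxx hcx]].
  simpl. set (x := phix p q) in *. set (c := phic p q) in *.
  assert (hy : (u/v)*(u/v) = c*(u/v+2)).
  { unfold c, phic. apply Rmult_eq_reg_r with (v*v*(q*q)); [|pos].
    replace (u / v * (u / v) * (v * v * (q * q))) with (u^2*(q*q)) by fld.
    replace (p * (2 * p + q) / (q * q) * (u / v + 2) * (v * v * (q * q)))
      with ((2*p+q)*v*(p*(u+2*v))) by fld.
    rewrite h1, h2. ring. }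
  assert (e : u/v = x).
  { apply (quad_unique c); auto; unfold c, phic; pos; nra. }
  assert (eu : u = x*v) by (rewrite <- e; field; lra).
  subst u. split.
  - apply Rmult_eq_reg_r with x; [|pos]. field_simplify; [|pos].
    nra.
  - apply Rmult_eq_reg_r with (x*x); [|pos]. field_simplify; [|pos]. nra.
Qed.

Lemma step_scale s p q u v : step p q u v -> step (s*p) (s*q) (s*u) (s*v).
Proof. intros [h1 h2]; split; [ring_simplify; rewrite h1 | ring_simplify; rewrite <- h2]; ring. Qed.

Lemma phi_scale s p q : 0 < s -> 0 < p -> 0 < q ->
  phi (s*p, s*q) = (s * fst (phi (p,q)), s * snd (phi (p,q))).
Proof.
  intros hs hp hq. destruct (phi_pos p q hp hq) as [h1 h2].
  destruct (step_unique (s*p) (s*q) (s*fst (phi (p,q))) (s*snd (phi (p,q))))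
    as [e1 e2]; try nra.
  - apply step_scale, phi_step; auto.
  - destruct (phi (s*p,s*q)); simpl in *; subst; auto.
Qed.


Fixpoint orb (p q : R) (k : nat) : R*R :=
  match k with O => (p,q) | S k => phi (orb p q k) end.
Definition oa p q k := fst (orb p q k).
Definition ob p q k := snd (orb p q k).

Lemma oa_S p q k : oa p q (S k) = fst (phi (oa p q k, ob p q k)).
Proof. unfold oa, ob; simpl; destruct (orb p q k); reflexivity. Qed.
Lemma ob_S p q k : ob p q (S k) = snd (phi (oa p q k, ob p q k)).
Proof. unfold oa, ob; simpl; destruct (orb p q k); reflexivity. Qed.
Lemma oa_0 p q : oa p q 0 = p. Proof. reflexivity. Qed.
Lemma ob_0 p q : ob p q 0 = q. Proof. reflexivity. Qed.

Lemma orb_pos p q k : 0 < p -> 0 < q -> 0 < oa p q k /\ 0 < ob p q k.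
Proof.
  intros hp hq; induction k as [|k [h1 h2]]; [simpl; auto|].
  rewrite oa_S, ob_S. apply phi_pos; auto.
Qed.

Lemma orb_step p q k : 0 < p -> 0 < q ->
  step (oa p q k) (ob p q k) (oa p q (S k)) (ob p q (S k)).
Proof.
  intros hp hq. destruct (orb_pos p q k hp hq).
  rewrite oa_S, ob_S. apply phi_step; auto.
Qed.

Lemma orb_scale s p q k : 0 < s -> 0 < p -> 0 < q ->
  oa (s*p) (s*q) k = s * oa p q k /\ ob (s*p) (s*q) k = s * ob p q k.
Proof.
  intros hs hp hq; induction k as [|k [h1 h2]]; [simpl; auto|].
  destruct (orb_pos p q k hp hq).
  rewrite !oa_S, !ob_S, h1, h2, phi_scale; simpl; auto.
Qed.

Lemma step_ratio p q u v : 0 < p -> 0 < q -> 0 < u -> 0 < v -> step p q u v ->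
  u / v = phix p q.
Proof.
  intros hp hq hu hv hs. destruct (step_unique p q u v hp hq hu hv hs) as [e1 e2].
  destruct (phix_spec p q hp hq) as [hx _].
  rewrite e1, e2; simpl. field. split; apply Rgt_not_eq; nra.
Qed.

Lemma step_r1 p q u v : 0 < p -> 0 < q -> 0 < u -> 0 < v -> step p q u v ->
  q/5 <= p -> v/2 <= u.
Proof.
  intros hp hq hu hv [h1 h2] h. destruct (Rle_or_lt (v/2) u) as [|hc]; auto.
  assert (u^2 < v^2/4) by nra.
  assert (2*p+q < v/4) by nra.
  assert (q^2 > 8*p*(2*p+q)) by nra.
  nra.
Qed.

Lemma step_r2 p q u v : 0 < p -> 0 < q -> 0 < u -> 0 < v -> step p q u v ->
  q/2 <= p -> v <= u.
Proof.
  intros hp hq hu hv [h1 h2] h. destruct (Rle_or_lt v u) as [|hc]; auto.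
  assert (u^2 < v^2) by nra.
  assert (2*p+q < v) by nra.
  assert (q^2 > 2*p*(2*p+q)) by nra.
  nra.
Qed.

Lemma step_s p q u v : 0 < p -> 0 < q -> 0 < u -> 0 < v -> step p q u v ->
  forall k, 0 < k -> q/k <= p -> u + 2*v <= k*q.
Proof.
  intros hp hq hu hv [h1 h2] k hk h.
  apply Rmult_le_reg_l with p; auto.
  rewrite h2.
  assert (q <= k*p) by (apply Rmult_le_reg_l with (/k); [apply Rinv_0_lt_compat; lra|];
     rewrite <- Rmult_assoc, Rinv_l; lra).
  nra.
Qed.

Section Bounds.
Variables p0 q0 : R.
Hypothesis hp0 : 0 < p0.
Hypothesis hq0 : 0 < q0.
Hypothesis hr0 : q0/5 <= p0.

Let a k := oa p0 q0 k.
Let b k := ob p0 q0 k.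

Lemma bnd_aux k : b (k+2)%nat <= a (k+2)%nat /\
  a (k+2)%nat + 2 * b (k+2)%nat <= 5*q0*(/3)^k.
Proof.
  induction k as [|k [IH1 IH2]].
  - destruct (orb_pos p0 q0 1 hp0 hq0) as [pa1 pb1].
    destruct (orb_pos p0 q0 2 hp0 hq0) as [pa2 pb2].
    pose proof (orb_step p0 q0 0 hp0 hq0) as s0.
    pose proof (orb_step p0 q0 1 hp0 hq0) as s1.
    rewrite oa_0, ob_0 in s0.
    pose proof (step_r1 _ _ _ _ hp0 hq0 pa1 pb1 s0 hr0) as r1.
    pose proof (step_r2 _ _ _ _ pa1 pb1 pa2 pb2 s1 ltac:(lra)) as r2.
    pose proof (step_s _ _ _ _ hp0 hq0 pa1 pb1 s0 5 ltac:(lra) hr0) as e1.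
    pose proof (step_s _ _ _ _ pa1 pb1 pa2 pb2 s1 2 ltac:(lra) ltac:(lra)) as e2.
    unfold a, b; simpl (0+2)%nat. simpl pow. lra.
  - destruct (orb_pos p0 q0 (k+2) hp0 hq0) as [pa1 pb1].
    destruct (orb_pos p0 q0 (S k+2) hp0 hq0) as [pa2 pb2].
    pose proof (orb_step p0 q0 (k+2) hp0 hq0) as s1.
    replace (S (k+2)) with (S k + 2)%nat in s1 by lia.
    fold (a (k+2)%nat) (b (k+2)%nat) (a (S k+2)%nat) (b (S k+2)%nat) in *.
    pose proof (step_r2 _ _ _ _ pa1 pb1 pa2 pb2 s1 ltac:(lra)) as r2.
    pose proof (step_s _ _ _ _ pa1 pb1 pa2 pb2 s1 1 ltac:(lra) ltac:(lra)) as e2.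
    split; [lra|]. simpl pow. lra.
Qed.

Lemma orb_bound k : a k + 2 * b k <= (p0 + 45*q0) * (/3)^k.
Proof.
  destruct k as [|[|k]].
  - unfold a, b; rewrite oa_0, ob_0; simpl pow; lra.
  - destruct (orb_pos p0 q0 1 hp0 hq0) as [pa1 pb1].
    pose proof (orb_step p0 q0 0 hp0 hq0) as s0. rewrite oa_0, ob_0 in s0.
    pose proof (step_s _ _ _ _ hp0 hq0 pa1 pb1 s0 5 ltac:(lra) hr0) as e1.
    unfold a, b; simpl pow. lra.
  - destruct (bnd_aux k) as [_ h]. replace (S (S k)) with (k+2)%nat by lia.
    rewrite pow_add. simpl pow.
    assert (0 < (/3)^k) by (apply pow_lt; lra). nra.
Qed.

Lemma orb_tail K : b K <= a K -> forall j,
  b (K+1+j)%nat <= a (K+1+j)%nat /\ a (K+1+j)%nat + 2 * b (K+1+j)%nat <= b K * (/3)^j.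
Proof.
  intros hK. induction j as [|j [IH1 IH2]].
  - destruct (orb_pos p0 q0 K hp0 hq0) as [pa1 pb1].
    destruct (orb_pos p0 q0 (S K) hp0 hq0) as [pa2 pb2].
    pose proof (orb_step p0 q0 K hp0 hq0) as s1.
    fold (a K) (b K) (a (S K)) (b (S K)) in *.
    pose proof (step_r2 _ _ _ _ pa1 pb1 pa2 pb2 s1 ltac:(lra)) as r2.
    pose proof (step_s _ _ _ _ pa1 pb1 pa2 pb2 s1 1 ltac:(lra) ltac:(lra)) as e2.
    replace (K+1+0)%nat with (S K) by lia. simpl pow. lra.
  - destruct (orb_pos p0 q0 (K+1+j) hp0 hq0) as [pa1 pb1].
    destruct (orb_pos p0 q0 (S (K+1+j)) hp0 hq0) as [pa2 pb2].
    pose proof (orb_step p0 q0 (K+1+j) hp0 hq0) as s1.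
    fold (a (K+1+j)%nat) (b (K+1+j)%nat) (a (S (K+1+j))) (b (S (K+1+j))) in *.
    pose proof (step_r2 _ _ _ _ pa1 pb1 pa2 pb2 s1 ltac:(lra)) as r2.
    pose proof (step_s _ _ _ _ pa1 pb1 pa2 pb2 s1 1 ltac:(lra) ltac:(lra)) as e2.
    replace (K+1+S j)%nat with (S (K+1+j)) by lia. simpl pow. lra.
Qed.

End Bounds.


Lemma is_series_lim a l : is_lim_seq (sum_n a) (Finite l) -> is_series a l.
Proof. intro H; exact H. Qed.
Lemma lim_is_series a l : is_series a l -> is_lim_seq (sum_n a) (Finite l).
Proof. intro H; exact H. Qed.

Lemma sum_n_S (a : nat -> R) n : sum_n a (S n) = sum_n a n + a (S n).
Proof. rewrite !sum_n_Reals. reflexivity. Qed.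
Lemma sum_n_0 (a : nat -> R) : sum_n a 0 = a 0%nat.
Proof. rewrite sum_n_Reals. reflexivity. Qed.

Lemma tele_series (u w : Z -> R) R L :
  (forall j, u (j+1)%Z = u j + w j) -> lim_plus u R -> lim_minus u L ->
  is_series (fun k => w (Z.of_nat k)) (R - u 0%Z) /\
  is_series (fun k => w (-1 - Z.of_nat k)%Z) (u 0%Z - L).
Proof.
  intros hu hR hL. split; apply is_series_lim.
  - assert (e : forall n, sum_n (fun k => w (Z.of_nat k)) n = u (Z.of_nat (S n)) - u 0%Z).
    { induction n.
      - rewrite sum_n_0. pose proof (hu 0%Z) as h. simpl in h. simpl. lra.
      - rewrite sum_n_S, IHn. rewrite (Nat2Z.inj_succ (S n)). unfold Z.succ.
        rewrite hu. lra. }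
    apply (is_lim_seq_ext (fun n => u (Z.of_nat (S n)) - u 0%Z)); [intros; rewrite e; auto|].
    apply is_lim_seq_minus'; [|apply is_lim_seq_const].
    apply (is_lim_seq_incr_1 (fun n => u (Z.of_nat n))). exact hR.
  - assert (e : forall n, sum_n (fun k => w (-1 - Z.of_nat k)%Z) n = u 0%Z - u (- Z.of_nat (S n))%Z).
    { induction n.
      - rewrite sum_n_0. pose proof (hu (-1)%Z) as h. simpl in h. simpl. lra.
      - rewrite sum_n_S, IHn.
        pose proof (hu (-1 - Z.of_nat (S n))%Z) as h.
        replace (-1 - Z.of_nat (S n) + 1)%Z with (- Z.of_nat (S n))%Z in h by lia.
        replace (- Z.of_nat (S (S n)))%Z with (-1 - Z.of_nat (S n))%Z by lia. lra. }
    apply (is_lim_seq_ext (fun n => u 0%Z - u (- Z.of_nat (S n))%Z)); [intros; rewrite e; auto|].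
    apply is_lim_seq_minus'; [apply is_lim_seq_const|].
    apply (is_lim_seq_incr_1 (fun n => u (- Z.of_nat n)%Z)). exact hL.
Qed.

Definition Tz (w : Z -> R) (j : Z) : R := Series (fun k => w (j + Z.of_nat k)%Z).

Section Constr.
Variable w : Z -> R.
Hypothesis hf : ex_series (fun k => w (Z.of_nat k)).
Hypothesis hb : ex_series (fun k => w (-1 - Z.of_nat k)%Z).

Lemma Tz_ex j : ex_series (fun k => w (j + Z.of_nat k)%Z).
Proof.
  destruct (Z_le_gt_dec 0 j) as [h|h].
  - destruct (Z_of_nat_complete _ h) as [n ->].
    apply (ex_series_ext (fun k => w (Z.of_nat (n + k)))).
    { intros; f_equal; lia. }
    apply (proj1 (ex_series_incr_n (fun k => w (Z.of_nat k)) n)); auto.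
  - assert (h' : (0 <= - j)%Z) by lia.
    destruct (Z_of_nat_complete _ h') as [n hn].
    apply (proj2 (ex_series_incr_n _ n)).
    apply (ex_series_ext (fun k => w (Z.of_nat k))); auto.
    intros; f_equal; lia.
Qed.

Lemma Tz_step j : Tz w j = w j + Tz w (j+1)%Z.
Proof.
  unfold Tz. rewrite Series_incr_1 by apply Tz_ex.
  f_equal; [f_equal; lia|]. apply Series_ext; intros; f_equal; lia.
Qed.

Lemma Tz_0 : Tz w 0 = Series (fun k => w (Z.of_nat k)).
Proof. unfold Tz. apply Series_ext; intros; f_equal. Qed.

Lemma Tz_lim_plus : is_lim_seq (fun k => Tz w (Z.of_nat k)) 0.
Proof.
  assert (e : forall n, Tz w (Z.of_nat (S n)) = Tz w 0 - sum_n (fun k => w (Z.of_nat k)) n).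
  { induction n.
    - rewrite sum_n_0, (Tz_step 0). simpl. lra.
    - rewrite sum_n_S. rewrite (Tz_step (Z.of_nat (S n))) in IHn.
      replace (Z.of_nat (S (S n))) with (Z.of_nat (S n) + 1)%Z by lia. lra. }
  apply (is_lim_seq_incr_1 (fun k => Tz w (Z.of_nat k))).
  apply (is_lim_seq_ext (fun n => Tz w 0 - sum_n (fun k => w (Z.of_nat k)) n)).
  { intros; rewrite e; auto. }
  replace 0 with (Tz w 0 - Series (fun k => w (Z.of_nat k))) by (rewrite Tz_0; ring).
  apply is_lim_seq_minus'; [apply is_lim_seq_const|].
  apply lim_is_series, Series_correct; auto.
Qed.

Lemma Tz_lim_minus : is_lim_seq (fun k => Tz w (- Z.of_nat k)%Z)
   (Series (fun k => w (Z.of_nat k)) + Series (fun k => w (-1 - Z.of_nat k)%Z)).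
Proof.
  assert (e : forall n, Tz w (- Z.of_nat (S n))%Z = Tz w 0 + sum_n (fun k => w (-1 - Z.of_nat k)%Z) n).
  { induction n.
    - rewrite sum_n_0. replace (- Z.of_nat 1)%Z with (-1)%Z by lia. rewrite (Tz_step (-1)%Z). replace (-1 - Z.of_nat 0)%Z with (-1)%Z by lia. replace (-1+1)%Z with 0%Z by lia. lra.
    - rewrite sum_n_S. rewrite (Tz_step (- Z.of_nat (S (S n)))%Z).
      replace (- Z.of_nat (S (S n)) + 1)%Z with (- Z.of_nat (S n))%Z by lia.
      replace (-1 - Z.of_nat (S n))%Z with (- Z.of_nat (S (S n)))%Z by lia. lra. }
  apply (is_lim_seq_incr_1 (fun k => Tz w (- Z.of_nat k)%Z)).
  apply (is_lim_seq_ext (fun n => Tz w 0 + sum_n (fun k => w (-1 - Z.of_nat k)%Z) n)).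
  { intros; rewrite e; auto. }
  rewrite <- Tz_0.
  apply is_lim_seq_plus'; [apply is_lim_seq_const|].
  apply lim_is_series, Series_correct; auto.
Qed.

Lemma constr_u R :
  let u := fun j => R - Tz w j in
  (forall j, u (j+1)%Z = u j + w j) /\ lim_plus u R /\
  lim_minus u (R - (Series (fun k => w (Z.of_nat k)) + Series (fun k => w (-1 - Z.of_nat k)%Z))).
Proof.
  intro u. split; [|split].
  - intro j. unfold u. rewrite (Tz_step j). ring.
  - unfold lim_plus, u.
    pose proof (is_lim_seq_minus' _ _ R 0 (is_lim_seq_const R) Tz_lim_plus) as H.
    rewrite Rminus_0_r in H. exact H.
  - unfold lim_minus, u.
    apply is_lim_seq_minus'; [apply is_lim_seq_const|apply Tz_lim_minus].
Qed.
End Constr.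


Lemma loc_m a b m0 m1 mm : 0 < a -> 0 < b ->
  (a+b)*(m0 + a) = a*m1 + b*mm -> (a+b)^2 = b*(m1 - mm) ->
  m1 = m0 + (2*a+b) /\ b*(m0 - mm) = a^2.
Proof.
  intros ha hb e1 e3.
  assert (h : (a+b)*(m1 - m0 - (2*a+b)) = 0) by nra.
  apply Rmult_integral in h. destruct h as [h|h]; [lra|].
  split; [lra|]. nra.
Qed.

Lemma loc_n a b n0 n1 nm : 0 < a -> 0 < b ->
  (a+b)*(n0 + b) = a*n1 + b*nm -> (a+b)^2 = a*(nm - n1) ->
  nm = n0 + (a+2*b) /\ a*(n0 - n1) = b^2.
Proof.
  intros ha hb e1 e3.
  assert (h : (a+b)*(nm - n0 - (a+2*b)) = 0) by nra.
  apply Rmult_integral in h. destruct h as [h|h]; [lra|].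
  split; [lra|]. nra.
Qed.

Lemma sol_to_diff a b m n : positive_ABMN_solution a b m n ->
  (forall i, m (i+1)%Z = m i + (2*a i + b i)) /\
  (forall i, n (i-1)%Z = n i + (a i + 2*b i)) /\
  (forall i, step (a (i-1)%Z) (b (i-1)%Z) (a i) (b i)).
Proof.
  intros [hs hp].
  assert (LM : forall i, m (i+1)%Z = m i + (2*a i + b i) /\ b i * (m i - m (i-1)%Z) = (a i)^2).
  { intro i. destruct (hs i) as [_ [_ [e1 [e2 [e3 e4]]]]]. destruct (hp i).
    apply loc_m; auto. }
  assert (LN : forall i, n (i-1)%Z = n i + (a i + 2*b i) /\ a i * (n i - n (i+1)%Z) = (b i)^2).
  { intro i. destruct (hs i) as [_ [_ [e1 [e2 [e3 e4]]]]]. destruct (hp i).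
    apply loc_n; auto. }
  split; [intro i; apply LM|]. split; [intro i; apply LN|].
  intro i. split.
  - destruct (LM i) as [_ h]. destruct (LM (i-1)%Z) as [h' _].
    replace (i-1+1)%Z with i in h' by lia. rewrite <- h. rewrite h'. ring.
  - destruct (LN i) as [h _]. destruct (LN (i-1)%Z) as [_ h'].
    replace (i-1+1)%Z with i in h' by lia. rewrite <- h'. rewrite h. ring.
Qed.

Lemma diff_to_sol a b m n :
  (forall i, 0 < a i /\ 0 < b i) ->
  (forall i, m (i+1)%Z = m i + (2*a i + b i)) ->
  (forall i, n (i-1)%Z = n i + (a i + 2*b i)) ->
  (forall i, step (a (i-1)%Z) (b (i-1)%Z) (a i) (b i)) ->
  positive_ABMN_solution a b m n.
Proof.
  intros hp hm hn hst. split; [|auto]. intro i.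
  destruct (hp i) as [ha hb].
  pose proof (hm i) as m1. pose proof (hm (i-1)%Z) as m0.
  replace (i-1+1)%Z with i in m0 by lia.
  pose proof (hn i) as n0. pose proof (hn (i+1)%Z) as n1.
  replace (i+1-1)%Z with i in n1 by lia.
  destruct (hst i) as [s1 _]. destruct (hst (i+1)%Z) as [_ s2].
  replace (i+1-1)%Z with i in s2 by lia.
  split; [lra|]. split; [lra|].
  rewrite m1, n0.
  assert (em : m (i-1)%Z = m i - (2 * a (i - 1)%Z + b (i - 1)%Z)) by lra.
  assert (en : n (i+1)%Z = n i - (a (i + 1)%Z + 2 * b (i + 1)%Z)) by lra.
  rewrite em, en.
  split; [|split; [|split]]; nra.
Qed.

Lemma lim_plus_shift u l i : lim_plus u l -> lim_plus (fun z => u (z + i)%Z) l.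
Proof.
  unfold lim_plus. intro H.
  destruct (Z_le_gt_dec 0 i) as [h|h].
  - destruct (Z_of_nat_complete _ h) as [N ->].
    apply (is_lim_seq_ext (fun k => u (Z.of_nat (k + N)))).
    { intros; f_equal; lia. }
    apply (proj1 (is_lim_seq_incr_n (fun k => u (Z.of_nat k)) N l)); auto.
  - assert (h' : (0 <= - i)%Z) by lia.
    destruct (Z_of_nat_complete _ h') as [N hN].
    apply (proj2 (is_lim_seq_incr_n _ N l)).
    apply (is_lim_seq_ext (fun k => u (Z.of_nat k))); auto.
    intros; f_equal; lia.
Qed.

Lemma lim_minus_shift u l i : lim_minus u l -> lim_minus (fun z => u (z + i)%Z) l.
Proof.
  unfold lim_minus. intro H.
  pose proof (lim_plus_shift (fun z => u (- z)%Z) l (- i)%Z H) as H'.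
  unfold lim_plus in H'.
  apply (is_lim_seq_ext _ _ _ (fun k => f_equal u (ltac:(lia) : (- (Z.of_nat k + - i) = - Z.of_nat k + i)%Z))).
  exact H'.
Qed.

Lemma shift_sol a b m n i : positive_ABMN_solution a b m n ->
  positive_ABMN_solution (fun z => a (z+i)%Z) (fun z => b (z+i)%Z)
     (fun z => m (z+i)%Z) (fun z => n (z+i)%Z).
Proof.
  intros [hs hp]. split; [|intro z; apply hp].
  intro z. destruct (hs (z+i)%Z) as [h1 [h2 [h3 [h4 [h5 h6]]]]].
  replace (z+1+i)%Z with (z+i+1)%Z by lia. replace (z-1+i)%Z with (z+i-1)%Z by lia.
  auto.
Qed.

Lemma shift_realizable a b m n mL mR nL nR i :
  positive_ABMN_solution a b m n -> has_boundary_data m n mL mR nL nR ->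
  positive_ABMN_solution (fun z => a (z+i)%Z) (fun z => b (z+i)%Z)
     (fun z => m (z+i)%Z) (fun z => n (z+i)%Z) /\
  has_boundary_data (fun z => m (z+i)%Z) (fun z => n (z+i)%Z) mL mR nL nR.
Proof.
  intros hs [h1 [h2 [h3 h4]]]. split; [apply shift_sol; auto|].
  split; [apply lim_minus_shift; auto|]. split; [apply lim_plus_shift; auto|].
  split; [apply lim_minus_shift; auto|apply lim_plus_shift; auto].
Qed.

Lemma reflect_realizable mL mR nL nR : realizable mL mR nL nR -> realizable nR nL mR mL.
Proof.
  intros [a [b [m [n [[hs hp] [h1 [h2 [h3 h4]]]]]]]].
  exists (fun z => b (-z)%Z), (fun z => a (-z)%Z), (fun z => n (-z)%Z), (fun z => m (-z)%Z).
  split; [split|].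
  - intro z. destruct (hs (-z)%Z) as [e1 [e2 [e3 [e4 [e5 e6]]]]].
    replace (-(z+1))%Z with (-z-1)%Z by lia. replace (-(z-1))%Z with (-z+1)%Z by lia.
    split; [auto|]. split; [auto|].
    split; [lra|]. split; [lra|]. split; lra.
  - intro z; destruct (hp (-z)%Z); auto.
  - unfold has_boundary_data, lim_minus, lim_plus in *.
    split; [|split; [auto|split; auto]].
    + apply (is_lim_seq_ext (fun k => n (Z.of_nat k))); auto. intros; f_equal; lia.
    + apply (is_lim_seq_ext (fun k => m (Z.of_nat k))); auto. intros; f_equal; lia.
Qed.


Definition fa t k := oa t 1 k.
Definition fb t k := ob t 1 k.
Definition ba t k := ob 1 t k.
Definition bb t k := oa 1 t k.

Definition mdiff t := Series (fun k => 2*fa t k + fb t k) + Series (fun k => 2*ba t (S k) + bb t (S k)).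
Definition ndiff t := Series (fun k => fa t k + 2*fb t k) + Series (fun k => ba t (S k) + 2*bb t (S k)).
Definition G t := ndiff t / mdiff t.

Lemma step_swap p q u v : step p q u v -> step v u q p.
Proof. intros [h1 h2]; split; [rewrite <- h2 | rewrite h1]; ring. Qed.

Lemma ex_series_geom3 (f : nat -> R) C : (forall k, 0 <= f k <= C * (/3)^k) -> ex_series f.
Proof.
  intro h. apply (ex_series_le f (fun k => C * (/3)^k)).
  - intro k. change (norm (f k)) with (Rabs (f k)). rewrite Rabs_pos_eq; apply h.
  - apply (ex_series_scal_l C (fun k => (/3)^k)).
    exists (/ (1 - /3)). apply is_series_geom. rewrite Rabs_pos_eq; lra.
Qed.

Lemma orbit_bounds t : 1/5 <= t <= 5 -> forall k,
  0 < fa t k /\ 0 < fb t k /\ 0 < ba t k /\ 0 < bb t k /\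
  fa t k + 2*fb t k <= 250 * (/3)^k /\ bb t k + 2 * ba t k <= 250 * (/3)^k.
Proof.
  intros ht k. unfold fa, fb, ba, bb.
  destruct (orb_pos t 1 k ltac:(lra) ltac:(lra)).
  destruct (orb_pos 1 t k ltac:(lra) ltac:(lra)).
  pose proof (orb_bound t 1 ltac:(lra) ltac:(lra) ltac:(lra) k).
  pose proof (orb_bound 1 t ltac:(lra) ltac:(lra) ltac:(lra) k).
  assert (0 < (/3)^k) by (apply pow_lt; lra).
  repeat split; auto; nra.
Qed.

Lemma orbit_ex t : 1/5 <= t <= 5 ->
  ex_series (fun k => 2*fa t k + fb t k) /\ ex_series (fun k => 2*ba t (S k) + bb t (S k)) /\
  ex_series (fun k => fa t k + 2*fb t k) /\ ex_series (fun k => ba t (S k) + 2*bb t (S k)).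
Proof.
  intro ht. pose proof (orbit_bounds t ht) as B.
  split; [|split; [|split]]; apply (ex_series_geom3 _ 500); intro k.
  - destruct (B k) as [? [? [? [? [? ?]]]]]. split; lra.
  - destruct (B (S k)) as [? [? [? [? [? ?]]]]].
    assert ((/3)^(S k) <= (/3)^k) by (simpl; assert (0 < (/3)^k) by (apply pow_lt; lra); lra).
    split; lra.
  - destruct (B k) as [? [? [? [? [? ?]]]]]. split; lra.
  - destruct (B (S k)) as [? [? [? [? [? ?]]]]].
    assert ((/3)^(S k) <= (/3)^k) by (simpl; assert (0 < (/3)^k) by (apply pow_lt; lra); lra).
    split; lra.
Qed.

Lemma Series_ge0 (f : nat -> R) : ex_series f -> (forall k, 0 <= f k) -> 0 <= Series f.
Proof.
  intros he hp. pose proof (Series_le (fun _ => 0) f ltac:(intro n; split; [lra|auto]) he) as H.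
  rewrite (Series_ext (fun _ => 0) (fun n => 0 * f n)) in H by (intro; ring).
  rewrite Series_scal_l in H. lra.
Qed.

Lemma Series_pos_first (f : nat -> R) : ex_series f -> (forall k, 0 <= f k) -> f 0%nat <= Series f.
Proof.
  intros he hp. rewrite Series_incr_1 by auto.
  assert (0 <= Series (fun k => f (S k))).
  { apply Series_ge0; [apply (proj1 (ex_series_incr_1 f)); auto|intro; auto]. }
  lra.
Qed.

Lemma mdiff_pos t : 1/5 <= t <= 5 -> 0 < mdiff t /\ 0 < ndiff t.
Proof.
  intro ht. destruct (orbit_ex t ht) as [e1 [e2 [e3 e4]]].
  pose proof (orbit_bounds t ht) as B.
  unfold mdiff, ndiff.
  assert (forall k, 0 <= 2*fa t k + fb t k) by (intro k; destruct (B k) as [? [? _]]; lra).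
  assert (forall k, 0 <= 2*ba t (S k) + bb t (S k)) by (intro k; destruct (B (S k)) as [? [? [? [? _]]]]; lra).
  assert (forall k, 0 <= fa t k + 2*fb t k) by (intro k; destruct (B k) as [? [? _]]; lra).
  assert (forall k, 0 <= ba t (S k) + 2*bb t (S k)) by (intro k; destruct (B (S k)) as [? [? [? [? _]]]]; lra).
  pose proof (Series_pos_first _ e1 H). pose proof (Series_pos_first _ e3 H1).
  pose proof (Series_ge0 _ e2 H0). pose proof (Series_ge0 _ e4 H2).
  destruct (B 0%nat) as [? [? _]]. lra.
Qed.


Lemma series_scaled_val (g : nat -> R) c L : 0 < c ->
  is_series (fun k => c * g k) L -> c * Series g = L.
Proof.
  intros hc h. rewrite <- Series_scal_l. apply is_series_unique; auto.
Qed.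

Lemma is_series_ext' (a b : nat -> R) l : is_series a l -> (forall n, a n = b n) -> is_series b l.
Proof. intros h e; exact (is_series_ext a b l e h). Qed.

Section Nec.
Variables (a b m n : Z -> R) (mL mR nL nR : R).
Hypothesis hs : positive_ABMN_solution a b m n.
Hypothesis hbd : has_boundary_data m n mL mR nL nR.

Let t := a 0%Z / b 0%Z.

Lemma b0_pos : 0 < b 0%Z /\ 0 < a 0%Z.
Proof. destruct hs as [_ hp]. destruct (hp 0%Z); auto. Qed.

Lemma fw_id k : a (Z.of_nat k) = b 0%Z * fa t k /\ b (Z.of_nat k) = b 0%Z * fb t k.
Proof.
  destruct b0_pos as [hb0 ha0]. destruct (sol_to_diff _ _ _ _ hs) as [_ [_ hst]].
  destruct hs as [_ hp].
  assert (ht : 0 < t) by (unfold t; apply Rdiv_lt_0_compat; auto).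
  induction k as [|k [IH1 IH2]].
  - unfold fa, fb; rewrite oa_0, ob_0. simpl. unfold t. split; [field; lra|ring].
  - pose proof (hst (Z.of_nat (S k))) as st.
    replace (Z.of_nat (S k) - 1)%Z with (Z.of_nat k) in st by lia.
    destruct (hp (Z.of_nat k)) as [q1 q2]. destruct (hp (Z.of_nat (S k))) as [q3 q4].
    destruct (step_unique _ _ _ _ q1 q2 q3 q4 st) as [e1 e2].
    rewrite IH1, IH2 in e1, e2.
    destruct (orb_pos t 1 k ht ltac:(lra)).
    rewrite phi_scale in e1, e2 by auto. simpl in e1, e2.
    unfold fa, fb. rewrite oa_S, ob_S. auto.
Qed.

Lemma bw_id k : a (- Z.of_nat k)%Z = b 0%Z * ba t k /\ b (- Z.of_nat k)%Z = b 0%Z * bb t k.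
Proof.
  destruct b0_pos as [hb0 ha0]. destruct (sol_to_diff _ _ _ _ hs) as [_ [_ hst]].
  destruct hs as [_ hp].
  assert (ht : 0 < t) by (unfold t; apply Rdiv_lt_0_compat; auto).
  induction k as [|k [IH1 IH2]].
  - unfold ba, bb; rewrite oa_0, ob_0. simpl. unfold t. split; [field; lra|ring].
  - pose proof (step_swap _ _ _ _ (hst (- Z.of_nat k)%Z)) as st.
    replace (- Z.of_nat k - 1)%Z with (- Z.of_nat (S k))%Z in st by lia.
    destruct (hp (- Z.of_nat k)%Z) as [q1 q2]. destruct (hp (- Z.of_nat (S k))%Z) as [q3 q4].
    destruct (step_unique _ _ _ _ q2 q1 q4 q3 st) as [e1 e2].
    rewrite IH1, IH2 in e1, e2.
    destruct (orb_pos 1 t k ltac:(lra) ht).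
    rewrite phi_scale in e1, e2 by auto. simpl in e1, e2.
    unfold ba, bb. rewrite oa_S, ob_S. auto.
Qed.

Lemma nec_diffs : mR - mL = b 0%Z * mdiff t /\ nL - nR = b 0%Z * ndiff t.
Proof.
  destruct b0_pos as [hb0 ha0]. destruct (sol_to_diff _ _ _ _ hs) as [hm [hn _]].
  destruct hbd as [h1 [h2 [h3 h4]]].
  split.
  - destruct (tele_series m (fun j => 2 * a j + b j) mR mL hm h2 h1) as [s1 s2].
    unfold mdiff. rewrite Rmult_plus_distr_l.
    rewrite (series_scaled_val _ _ (mR - m 0%Z) hb0).
    2:{ apply (is_series_ext' _ _ _ s1); intro k; cbv beta; destruct (fw_id k) as [e1 e2]; rewrite e1, e2; ring. }
    rewrite (series_scaled_val _ _ (m 0%Z - mL) hb0).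
    2:{ apply (is_series_ext' _ _ _ s2); intro k; cbv beta;
          replace (-1 - Z.of_nat k)%Z with (- Z.of_nat (S k))%Z by lia;
          destruct (bw_id (S k)) as [e1 e2]; rewrite e1, e2; ring. }
    ring.
  - set (u := fun j => - n (j - 1)%Z).
    assert (hu : forall j, u (j+1)%Z = u j + (a j + 2 * b j)).
    { intro j. unfold u. replace (j+1-1)%Z with j by lia. rewrite (hn j). ring. }
    assert (hR : lim_plus u (- nR)).
    { pose proof (lim_plus_shift n nR (-1)%Z h4) as H. unfold lim_plus in *.
      apply (proj1 (is_lim_seq_opp _ _)) in H.
      eapply is_lim_seq_ext; [|exact H]. intro k; cbv beta; unfold u; f_equal; f_equal; lia. }
    assert (hL : lim_minus u (- nL)).
    { pose proof (lim_minus_shift n nL (-1)%Z h3) as H. unfold lim_minus in *.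
      apply (proj1 (is_lim_seq_opp _ _)) in H.
      eapply is_lim_seq_ext; [|exact H]. intro k; cbv beta; unfold u; f_equal; f_equal; lia. }
    destruct (tele_series u (fun j => a j + 2 * b j) (- nR) (- nL) hu hR hL) as [s1 s2].
    unfold ndiff. rewrite Rmult_plus_distr_l.
    rewrite (series_scaled_val _ _ (- nR - u 0%Z) hb0).
    2:{ apply (is_series_ext' _ _ _ s1); intro k; cbv beta; destruct (fw_id k) as [e1 e2]; rewrite e1, e2; ring. }
    rewrite (series_scaled_val _ _ (u 0%Z - - nL) hb0).
    2:{ apply (is_series_ext' _ _ _ s2); intro k; cbv beta;
          replace (-1 - Z.of_nat k)%Z with (- Z.of_nat (S k))%Z by lia;
          destruct (bw_id (S k)) as [e1 e2]; rewrite e1, e2; ring. }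
    ring.
Qed.
End Nec.


Definition zsplit (f g : nat -> R) (z : Z) : R :=
  if (0 <=? z)%Z then f (Z.to_nat z) else g (Z.to_nat (- z)).

Lemma zsplit_pos f g k : zsplit f g (Z.of_nat k) = f k.
Proof.
  unfold zsplit. replace (0 <=? Z.of_nat k)%Z with true by (symmetry; apply Z.leb_le; lia).
  rewrite Nat2Z.id. auto.
Qed.

Lemma zsplit_neg f g k : f 0%nat = g 0%nat -> zsplit f g (- Z.of_nat k) = g k.
Proof.
  intro e. destruct k as [|k].
  - simpl. unfold zsplit. simpl. auto.
  - unfold zsplit. replace (0 <=? - Z.of_nat (S k))%Z with false by (symmetry; apply Z.leb_gt; lia).
    rewrite Z.opp_involutive, Nat2Z.id. auto.
Qed.

Lemma zcases z : (exists k, z = Z.of_nat (S k)) \/ (exists k, z = (- Z.of_nat k)%Z).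
Proof.
  destruct (Z_le_gt_dec z 0) as [h|h].
  - right. exists (Z.to_nat (- z)). lia.
  - left. exists (Z.to_nat (z - 1)). lia.
Qed.

Lemma ex_series_scal (c : R) (g : nat -> R) : ex_series g -> ex_series (fun k => c * g k).
Proof. intro h. apply (ex_series_ext (fun k => scal c (g k))); [intro; reflexivity|]. exact (@ex_series_scal_l R_AbsRing R_NormedModule c g h). Qed.

Lemma suff_realizable t mL mR nL nR : 1/5 <= t <= 5 -> mL < mR -> nR < nL ->
  mina_margin mL mR nL nR = G t -> realizable mL mR nL nR.
Proof.
  intros ht hm hn hG.
  destruct (mdiff_pos t ht) as [hmd hnd].
  destruct (orbit_ex t ht) as [e1 [e2 [e3 e4]]].
  pose proof (orbit_bounds t ht) as B.
  set (s := (mR - mL) / mdiff t).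
  assert (hs : 0 < s) by (unfold s; apply Rdiv_lt_0_compat; lra).
  assert (hsn : s * ndiff t = nL - nR).
  { unfold mina_margin, G in hG. unfold s.
    assert (H : nL - nR = (nL - nR)/(mR-mL) * (mR - mL)) by (field; lra).
    rewrite H, hG. field. lra. }
  assert (f0a : fa t 0%nat = ba t 0%nat) by reflexivity.
  assert (f0b : fb t 0%nat = bb t 0%nat) by reflexivity.
  set (A := fun z => s * zsplit (fa t) (ba t) z).
  set (Bz := fun z => s * zsplit (fb t) (bb t) z).
  assert (Ap : forall k, A (Z.of_nat k) = s * fa t k) by (intro; unfold A; rewrite zsplit_pos; auto).
  assert (Bp : forall k, Bz (Z.of_nat k) = s * fb t k) by (intro; unfold Bz; rewrite zsplit_pos; auto).
  assert (An : forall k, A (- Z.of_nat k)%Z = s * ba t k) by (intro; unfold A; rewrite zsplit_neg; auto).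
  assert (Bn : forall k, Bz (- Z.of_nat k)%Z = s * bb t k) by (intro; unfold Bz; rewrite zsplit_neg; auto).
  assert (hpos : forall i, 0 < A i /\ 0 < Bz i).
  { intro i. destruct (zcases i) as [[k ->]|[k ->]].
    - rewrite Ap, Bp. destruct (B (S k)) as [? [? _]]. split; apply Rmult_lt_0_compat; auto.
    - rewrite An, Bn. destruct (B k) as [? [? [? [? _]]]]. split; apply Rmult_lt_0_compat; auto. }
  assert (hst : forall i, step (A (i-1)%Z) (Bz (i-1)%Z) (A i) (Bz i)).
  { intro i. destruct (zcases i) as [[k ->]|[k ->]].
    - replace (Z.of_nat (S k) - 1)%Z with (Z.of_nat k) by lia.
      rewrite !Ap, !Bp. apply step_scale. apply orb_step; lra.
    - replace (- Z.of_nat k - 1)%Z with (- Z.of_nat (S k))%Z by lia.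
      rewrite !An, !Bn. apply step_scale. apply step_swap. apply orb_step; lra. }
  set (w := fun j => 2 * A j + Bz j).
  assert (wf : forall k, w (Z.of_nat k) = s * (2 * fa t k + fb t k))
    by (intro; unfold w; rewrite Ap, Bp; ring).
  assert (wb : forall k, w (-1 - Z.of_nat k)%Z = s * (2 * ba t (S k) + bb t (S k))).
  { intro k. replace (-1 - Z.of_nat k)%Z with (- Z.of_nat (S k))%Z by lia.
    unfold w; rewrite An, Bn; ring. }
  assert (wfe : ex_series (fun k => w (Z.of_nat k)))
    by (apply (ex_series_ext (fun k => s * (2 * fa t k + fb t k))); [intro; rewrite wf; auto|apply ex_series_scal; auto]).
  assert (wbe : ex_series (fun k => w (-1 - Z.of_nat k)%Z))
    by (apply (ex_series_ext (fun k => s * (2 * ba t (S k) + bb t (S k)))); [intro; rewrite wb; auto|apply ex_series_scal; auto]).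
  assert (wsum : Series (fun k => w (Z.of_nat k)) + Series (fun k => w (-1 - Z.of_nat k)%Z) = mR - mL).
  { rewrite (Series_ext _ _ wf), (Series_ext _ _ wb), !Series_scal_l.
    transitivity (s * mdiff t); [unfold mdiff; ring|unfold s; field; lra]. }
  destruct (constr_u w wfe wbe mR) as [mh [mp mmn]].
  set (m := fun j => mR - Tz w j) in *.
  set (v := fun j => A j + 2 * Bz j).
  assert (vf : forall k, v (Z.of_nat k) = s * (fa t k + 2 * fb t k))
    by (intro; unfold v; rewrite Ap, Bp; ring).
  assert (vb : forall k, v (-1 - Z.of_nat k)%Z = s * (ba t (S k) + 2 * bb t (S k))).
  { intro k. replace (-1 - Z.of_nat k)%Z with (- Z.of_nat (S k))%Z by lia.
    unfold v; rewrite An, Bn; ring. }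
  assert (vfe : ex_series (fun k => v (Z.of_nat k)))
    by (apply (ex_series_ext (fun k => s * (fa t k + 2 * fb t k))); [intro; rewrite vf; auto|apply ex_series_scal; auto]).
  assert (vbe : ex_series (fun k => v (-1 - Z.of_nat k)%Z))
    by (apply (ex_series_ext (fun k => s * (ba t (S k) + 2 * bb t (S k)))); [intro; rewrite vb; auto|apply ex_series_scal; auto]).
  assert (vsum : Series (fun k => v (Z.of_nat k)) + Series (fun k => v (-1 - Z.of_nat k)%Z) = nL - nR).
  { rewrite (Series_ext _ _ vf), (Series_ext _ _ vb), !Series_scal_l.
    rewrite <- hsn. unfold ndiff. ring. }
  destruct (constr_u v vfe vbe (- nR)) as [uh [up umn]].
  set (u := fun j => - nR - Tz v j) in *.
  set (n := fun j => - u (j + 1)%Z).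
  exists A, Bz, m, n. split.
  - apply diff_to_sol; auto.
    intro i. unfold n, u. replace (i - 1 + 1)%Z with i by lia.
    pose proof (uh i) as H. change (v i) with (A i + 2 * Bz i) in H. lra.
  - rewrite wsum in mmn. rewrite vsum in umn.
    split; [replace mL with (mR - (mR - mL)) by ring; auto|].
    split; [auto|]. split.
    + pose proof (lim_minus_shift u _ 1%Z umn) as H. unfold lim_minus in *.
      apply (proj1 (is_lim_seq_opp _ _)) in H.
      eapply is_lim_seq_ext; [|replace nL with (- (- nR - (nL - nR))) by ring; exact H].
      intro k; reflexivity.
    + pose proof (lim_plus_shift u _ 1%Z up) as H. unfold lim_plus in *.
      apply (proj1 (is_lim_seq_opp _ _)) in H.
      eapply is_lim_seq_ext; [|replace nR with (- (- nR)) by ring; exact H].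
      intro k; reflexivity.
Qed.


Definition rho := phix 1 1.

Lemma rho_bounds : 3 <= rho <= 9/2.
Proof.
  unfold rho, phix, phic.
  replace (1 * (2 * 1 + 1) / (1 * 1)) with 3 by field.
  pose proof (sqrt_pos (3*3+8*3)). pose proof (sqrt_sqrt (3*3+8*3) ltac:(lra)).
  split; nra.
Qed.

Lemma phic_ratio p q : 0 < q -> phic p q = (p/q) * (2*(p/q) + 1).
Proof. intro; unfold phic; field; lra. Qed.

Lemma ratio_facts p q u v : 0 < p -> 0 < q -> 0 < u -> 0 < v -> step p q u v ->
  let r := p/q in let x := u/v in
  (1 <= r -> 3 * r <= x) /\ (r < 1 -> 2 * r * r <= x * x) /\ (r < 1 -> x < rho).
Proof.
  intros hp hq hu hv hs r x.
  assert (ex : x = phix p q) by (apply step_ratio; auto).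
  destruct (phix_spec p q hp hq) as [hx [hxx hcx]].
  assert (hr : 0 < r) by (unfold r; apply Rdiv_lt_0_compat; auto).
  assert (hc : phic p q = r * (2*r+1)) by (apply phic_ratio; auto).
  rewrite <- ex in hxx, hcx, hx. rewrite hc in hxx, hcx.
  split; [|split].
  - intro h. nra.
  - intro h. nra.
  - intro h. rewrite ex. unfold rho, phix. rewrite hc.
    replace (phic 1 1) with 3 by (unfold phic; field).
    assert (r * (2 * r + 1) < 3) by nra.
    assert (sqrt (r * (2 * r + 1) * (r * (2 * r + 1)) + 8 * (r * (2 * r + 1))) < sqrt (3*3+8*3)).
    { apply sqrt_lt_1_alt. split; nra. }
    lra.
Qed.

Lemma pow_lin (c : R) k : 1 <= c -> 1 + (c - 1) * INR k <= c ^ k.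
Proof.
  intro hc. induction k.
  - simpl. lra.
  - rewrite S_INR. simpl pow. assert (1 <= c^k) by (apply pow_R1_Rle; lra). nra.
Qed.

Section Cross.
Variables (a b m n : Z -> R).
Hypothesis hs : positive_ABMN_solution a b m n.
Let r i := a i / b i.

Lemma r_pos i : 0 < r i.
Proof. destruct hs as [_ hp]; destruct (hp i); unfold r; apply Rdiv_lt_0_compat; auto. Qed.

Lemma r_facts i : (1 <= r (i-1)%Z -> 3 * r (i-1)%Z <= r i) /\
  (r (i-1)%Z < 1 -> 2 * r (i-1)%Z * r (i-1)%Z <= r i * r i) /\ (r (i-1)%Z < 1 -> r i < rho).
Proof.
  destruct (sol_to_diff _ _ _ _ hs) as [_ [_ hst]]. destruct hs as [_ hp].
  destruct (hp i). destruct (hp (i-1)%Z).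
  apply (ratio_facts (a (i-1)%Z) (b (i-1)%Z) (a i) (b i)); auto.
Qed.

Lemma exists_small : exists j, r j < 1.
Proof.
  apply NNPP. intro hn.
  assert (hall : forall j, 1 <= r j).
  { intro j. destruct (Rle_or_lt 1 (r j)); auto. exfalso; apply hn; exists j; auto. }
  assert (hk : forall k, 3 ^ k * r (- Z.of_nat k)%Z <= r 0%Z).
  { induction k.
    - simpl. replace (-0)%Z with 0%Z by lia. lra.
    - destruct (r_facts (- Z.of_nat k)%Z) as [f _].
      replace (- Z.of_nat k - 1)%Z with (- Z.of_nat (S k))%Z in f by lia.
      specialize (f (hall _)). simpl pow.
      assert (0 < 3^k) by (apply pow_lt; lra). nra. }
  destruct (INR_unbounded (r 0%Z)) as [N hN].
  specialize (hk N). pose proof (pow_lin 3 N ltac:(lra)). pose proof (hall (- Z.of_nat N)%Z).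
  assert (0 < 3^N) by (apply pow_lt; lra). nra.
Qed.

Lemma exists_big j0 : r j0 < 1 -> exists k, 1 <= r (j0 + Z.of_nat k)%Z.
Proof.
  intro h0. apply NNPP. intro hn.
  assert (hall : forall k, r (j0 + Z.of_nat k)%Z < 1).
  { intro k. destruct (Rle_or_lt 1 (r (j0 + Z.of_nat k)%Z)); auto. exfalso; apply hn; exists k; auto. }
  assert (hk : forall k, 2 ^ k * (r j0 * r j0) <= r (j0 + Z.of_nat k)%Z * r (j0 + Z.of_nat k)%Z).
  { induction k.
    - simpl. replace (j0 + 0)%Z with j0 by lia. lra.
    - destruct (r_facts (j0 + Z.of_nat (S k))%Z) as [_ [f _]].
      replace (j0 + Z.of_nat (S k) - 1)%Z with (j0 + Z.of_nat k)%Z in f by lia.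
      specialize (f (hall _)). simpl pow. nra. }
  pose proof (r_pos j0).
  destruct (INR_unbounded (/ (r j0 * r j0))) as [N hN].
  specialize (hk N). pose proof (pow_lin 2 N ltac:(lra)).
  pose proof (hall N). pose proof (r_pos (j0 + Z.of_nat N)%Z).
  assert (hi : (r j0 * r j0) * / (r j0 * r j0) = 1) by (field; lra).
  assert (0 < r j0 * r j0) by nra.
  assert (INR N * (r j0 * r j0) > 1) by nra.
  nra.
Qed.

Lemma crossing_aux k : forall j0, r j0 < 1 -> 1 <= r (j0 + Z.of_nat k)%Z ->
  exists i, r (i-1)%Z < 1 /\ 1 <= r i.
Proof.
  induction k; intros j0 h0 h1.
  - replace (j0 + Z.of_nat 0)%Z with j0 in h1 by lia. lra.
  - destruct (Rle_or_lt 1 (r (j0+1)%Z)) as [h|h].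
    + exists (j0+1)%Z. replace (j0+1-1)%Z with j0 by lia. auto.
    + apply (IHk (j0+1)%Z h). replace (j0 + 1 + Z.of_nat k)%Z with (j0 + Z.of_nat (S k))%Z by lia. auto.
Qed.

Lemma crossing : exists i, 1 <= a i / b i <= rho.
Proof.
  destruct exists_small as [j0 h0]. destruct (exists_big j0 h0) as [k hk].
  destruct (crossing_aux k j0 h0 hk) as [i [h1 h2]].
  exists i. destruct (r_facts i) as [_ [_ f]]. specialize (f h1). fold (r i). lra.
Qed.
End Cross.

Lemma crossing_sol a b m n : positive_ABMN_solution a b m n -> exists i, 1 <= a i / b i <= rho.
Proof. apply crossing. Qed.


Lemma step_deriv (P Q : R -> R) y : ex_derive P y -> ex_derive Q y -> 0 < P y -> 0 < Q y ->
  ex_derive (fun t => fst (phi (P t, Q t))) y /\ ex_derive (fun t => snd (phi (P t, Q t))) y.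
Proof.
  intros dP dQ hP hQ.
  assert (hc : 0 < P y * (2 * P y + Q y) * / (Q y * Q y)).
  { apply Rmult_lt_0_compat; [nra|apply Rinv_0_lt_compat; nra]. }
  assert (hs := sqrt_pos (P y * (2 * P y + Q y) * / (Q y * Q y) *
      (P y * (2 * P y + Q y) * / (Q y * Q y)) + 8 * (P y * (2 * P y + Q y) * / (Q y * Q y)))).
  simpl. unfold phix, phic. split; auto_derive; repeat split; auto;
    try (apply Rgt_not_eq; nra); nra.
Qed.

Lemma orb_deriv (P0 Q0 : R -> R) y : ex_derive P0 y -> ex_derive Q0 y -> 0 < P0 y -> 0 < Q0 y ->
  forall k, ex_derive (fun t => oa (P0 t) (Q0 t) k) y /\ ex_derive (fun t => ob (P0 t) (Q0 t) k) y.
Proof.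
  intros dP dQ hP hQ k. induction k as [|k [IH1 IH2]].
  - split; [apply (ex_derive_ext P0)|apply (ex_derive_ext Q0)]; auto.
  - destruct (orb_pos (P0 y) (Q0 y) k hP hQ).
    destruct (step_deriv _ _ y IH1 IH2) as [d1 d2]; auto.
    split; [eapply ex_derive_ext; [|exact d1]|eapply ex_derive_ext; [|exact d2]];
      intro t; cbv beta; [rewrite oa_S|rewrite ob_S]; reflexivity.
Qed.

Lemma cont_of_deriv f y : ex_derive f y -> continuity_pt f y.
Proof. intro h. apply continuity_pt_filterlim. apply (ex_derive_continuous f y h). Qed.

Lemma terms_cont y : 0 < y -> forall k,
  continuity_pt (fun t => fa t k) y /\ continuity_pt (fun t => fb t k) y /\
  continuity_pt (fun t => ba t k) y /\ continuity_pt (fun t => bb t k) y.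
Proof.
  intros hy k.
  assert (d1 : ex_derive (fun t : R => t) y) by (auto_derive; auto).
  assert (d2 : ex_derive (fun t : R => 1) y) by (auto_derive; auto).
  destruct (orb_deriv (fun t => t) (fun _ => 1) y d1 d2 hy ltac:(lra) k) as [e1 e2].
  destruct (orb_deriv (fun _ => 1) (fun t => t) y d2 d1 ltac:(lra) hy k) as [e3 e4].
  unfold fa, fb, ba, bb.
  repeat split; apply cont_of_deriv; auto.
Qed.

Lemma sum_cont (g : nat -> R -> R) y : (forall k, continuity_pt (g k) y) ->
  forall n, continuity_pt (fun t => sum_f_R0 (fun k => g k t) n) y.
Proof.
  intros h n. induction n.
  - exact (h 0%nat).
  - exact (continuity_pt_plus _ _ y IHn (h (S n))).
Qed.

Lemma series_cont (g : nat -> R -> R) (C : R) (d : posreal) t0 :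
  (forall k y, Boule t0 d y -> Rabs (g k y) <= C * (/3)^k) ->
  (forall k y, Boule t0 d y -> continuity_pt (g k) y) ->
  continuity_pt (fun y => Series (fun k => g k y)) t0.
Proof.
  intros hb hc.
  assert (hC : forall y, Boule t0 d y -> 0 <= C).
  { intros y hy. pose proof (hb 0%nat y hy). pose proof (Rabs_pos (g 0%nat y)). simpl in *. lra. }
  assert (hex : forall y, Boule t0 d y -> forall m, ex_series (fun k => Rabs (g (m + k)%nat y))).
  { intros y hy m. apply (@ex_series_le R_AbsRing R_CompleteNormedModule _ (fun k => C * (/3)^m * (/3)^k)).
    - intro k. change (norm (Rabs (g (m + k)%nat y))) with (Rabs (Rabs (g (m + k)%nat y))).
      rewrite Rabs_Rabsolu, Rmult_assoc, <- pow_add. apply hb; auto.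
    - apply (ex_series_ext (fun k => scal (C * (/3)^m) ((/3)^k))); [intro; reflexivity|].
      apply (@ex_series_scal_l R_AbsRing R_NormedModule).
      exists (/ (1 - /3)). apply is_series_geom. rewrite Rabs_pos_eq; lra. }
  assert (hex' : forall y, Boule t0 d y -> ex_series (fun k => g k y)).
  { intros y hy. apply (@ex_series_le R_AbsRing R_CompleteNormedModule _ (fun k => Rabs (g (0 + k)%nat y))); [|apply hex; auto].
    intro k. change (norm (g k y)) with (Rabs (g k y)). simpl. lra. }
  apply (CVU_continuity (fun n y => sum_f_R0 (fun k => g k y) n) _ t0 d).
  - intros eps heps.
    destruct (INR_unbounded (C * 3 / eps)) as [N hN].
    exists N. intros n y hn hy.
    rewrite (Series_incr_n _ (S n)) by (auto; lia).
    simpl (Init.Nat.pred (S n)).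
    replace (sum_f_R0 (fun k => g k y) n + Series (fun k => g (S n + k)%nat y) - sum_f_R0 (fun k => g k y) n)
      with (Series (fun k => g (S n + k)%nat y)) by ring.
    eapply Rle_lt_trans; [apply Series_Rabs; apply hex; auto|].
    eapply Rle_lt_trans.
    { apply (Series_le _ (fun k => C * (/3)^(S n) * (/3)^k)).
      - intro k. split; [apply Rabs_pos|]. rewrite Rmult_assoc, <- pow_add. apply hb; auto.
      - apply (ex_series_ext (fun k => scal (C * (/3)^(S n)) ((/3)^k))); [intro; reflexivity|].
        apply (@ex_series_scal_l R_AbsRing R_NormedModule).
        exists (/ (1 - /3)). apply is_series_geom. rewrite Rabs_pos_eq; lra. }
    rewrite Series_scal_l, Series_geom by (rewrite Rabs_pos_eq; lra).
    pose proof (hC y hy).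
    pose proof (pow_lin 3 (S n) ltac:(lra)).
    assert (hle : INR N <= INR (S n)) by (apply le_INR; lia).
    assert (h3 : 0 < 3 ^ (S n)) by (apply pow_lt; lra).
    rewrite <- Rinv_pow by lra.
    assert (hmul : C * 3 < eps * 3 ^ (S n)).
    { apply Rmult_lt_reg_r with (/eps); [apply Rinv_0_lt_compat; lra|].
      replace (eps * 3 ^ S n * / eps) with (3 ^ S n) by (field; lra).
      unfold Rdiv in hN. lra. }
    apply Rmult_lt_reg_r with (3 ^ (S n)); auto.
    replace (C * / 3 ^ S n * / (1 - / 3) * 3 ^ S n) with (C * 3 / 2) by (field; lra).
    lra.
  - intros n y hy. apply sum_cont. intro k; apply hc; auto.
  - unfold Boule. rewrite Rminus_diag, Rabs_R0. apply cond_pos.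
Qed.


Definition half : posreal := mkposreal (1/2) ltac:(lra).

Lemma ball_range t0 y : 1 <= t0 <= rho -> Boule t0 half y -> 1/5 <= y <= 5 /\ 0 < y.
Proof.
  intros ht hy. pose proof rho_bounds. unfold Boule in hy. simpl in hy.
  apply Rabs_def2 in hy. lra.
Qed.

Lemma pow3_S k : (/3)^(S k) <= (/3)^k.
Proof. simpl. assert (0 < (/3)^k) by (apply pow_lt; lra). lra. Qed.

Ltac series_cont_tac t0 ht :=
  apply (series_cont _ 500 half t0);
  [ intros k y hy; destruct (ball_range t0 y ht hy) as [hr _];
    pose proof (orbit_bounds y hr k) as B1; pose proof (orbit_bounds y hr (S k)) as B2;
    pose proof (pow3_S k);
    rewrite Rabs_pos_eq; lra
  | intros k y hy; destruct (ball_range t0 y ht hy) as [_ hp];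
    destruct (terms_cont y hp k) as [c1 [c2 [c3 c4]]];
    destruct (terms_cont y hp (S k)) as [d1 [d2 [d3 d4]]];
    first [ exact (continuity_pt_plus _ _ y (continuity_pt_scal _ 2 y c1) c2)
          | exact (continuity_pt_plus _ _ y c1 (continuity_pt_scal _ 2 y c2))
          | exact (continuity_pt_plus _ _ y (continuity_pt_scal _ 2 y d3) d4)
          | exact (continuity_pt_plus _ _ y d3 (continuity_pt_scal _ 2 y d4)) ] ].

Lemma G_cont t0 : 1 <= t0 <= rho -> continuity_pt G t0.
Proof.
  intro ht.
  assert (cm : continuity_pt mdiff t0).
  { apply (continuity_pt_plus (fun t => Series (fun k => 2*fa t k + fb t k))
                              (fun t => Series (fun k => 2*ba t (S k) + bb t (S k)))).
    - series_cont_tac t0 ht.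
    - series_cont_tac t0 ht. }
  assert (cn : continuity_pt ndiff t0).
  { apply (continuity_pt_plus (fun t => Series (fun k => fa t k + 2*fb t k))
                              (fun t => Series (fun k => ba t (S k) + 2*bb t (S k)))).
    - series_cont_tac t0 ht.
    - series_cont_tac t0 ht. }
  pose proof rho_bounds.
  destruct (mdiff_pos t0 ltac:(lra)) as [hm _].
  exact (continuity_pt_div _ _ t0 cn cm ltac:(lra)).
Qed.


Lemma core mL mR nL nR : realizable mL mR nL nR <->
  (mL < mR /\ nR < nL /\ exists t, 1 <= t <= rho /\ mina_margin mL mR nL nR = G t).
Proof.
  pose proof rho_bounds. split.
  - intros [a [b [m [n [hs hbd]]]]].
    destruct (crossing_sol a b m n hs) as [i hi].
    destruct (shift_realizable a b m n mL mR nL nR i hs hbd) as [hs' hbd'].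
    destruct (nec_diffs _ _ _ _ mL mR nL nR hs' hbd') as [e1 e2].
    cbv beta in e1, e2. simpl (0 + i)%Z in e1, e2.
    destruct hs as [_ hp]. destruct (hp i) as [ha hb].
    destruct (mdiff_pos (a i / b i) ltac:(lra)) as [hm hn].
    split; [nra|]. split; [nra|].
    exists (a i / b i). split; auto.
    unfold mina_margin, G. rewrite e1, e2. field. split; lra.
  - intros [hm [hn [t [ht he]]]]. apply (suff_realizable t); auto. lra.
Qed.

Definition Iset x := exists t, 1 <= t <= rho /\ x = G t.

Lemma G_pos t : 1 <= t <= rho -> 0 < G t.
Proof.
  intro ht. pose proof rho_bounds. destruct (mdiff_pos t ltac:(lra)).
  unfold G. apply Rdiv_lt_0_compat; auto.
Qed.

Lemma margins_Iset x : mina_margins x <-> Iset x.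
Proof.
  split.
  - intros [mL [mR [nL [nR [hr ->]]]]]. apply core in hr.
    destruct hr as [_ [_ [t [ht he]]]]. exists t; auto.
  - intros [t [ht ->]]. exists 0, 1, (G t), 0. split.
    + apply core. pose proof (G_pos t ht). split; [lra|]. split; [lra|].
      exists t. split; auto. unfold mina_margin. field.
    + unfold mina_margin. field.
Qed.

Lemma Iset_inv x : Iset x -> Iset (/ x).
Proof.
  intros [t [ht ->]]. pose proof (G_pos t ht).
  assert (hr : realizable 0 1 (G t) 0).
  { apply core. split; [lra|]. split; [lra|]. exists t; split; auto. unfold mina_margin; field. }
  apply reflect_realizable in hr. apply core in hr.
  destruct hr as [_ [_ [t' [ht' he]]]]. exists t'. split; auto.
  rewrite <- he. unfold mina_margin. field. lra.
Qed.

Lemma assemble (Hnum : exists t, 1 <= t <= rho /\ G t <= 999904 / 1000000) :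
  exists lambda : R,
    0 < lambda <= 1 /\
    (forall x : R, mina_margins x <-> lambda <= x <= / lambda) /\
    (forall mL mR nL nR : R,
        realizable mL mR nL nR <->
        (mL < mR /\ nR < nL /\
         lambda <= mina_margin mL mR nL nR <= / lambda)) /\
    lambda <= 999904 / 1000000.
Proof.
  pose proof rho_bounds.
  assert (hc : forall c, 1 <= c <= rho -> continuity_pt G c) by (intros; apply G_cont; auto).
  destruct (continuity_ab_min G 1 rho ltac:(lra) hc) as [tmin [hmin htmin]].
  destruct (continuity_ab_maj G 1 rho ltac:(lra) hc) as [tmax [hmax htmax]].
  set (lam := G tmin).
  assert (hlam : 0 < lam) by (apply G_pos; auto).
  assert (hmx : G tmax = / lam).
  { assert (i1 : Iset (/ G tmax)) by (apply Iset_inv; exists tmax; auto).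
    assert (i2 : Iset (/ lam)) by (apply Iset_inv; exists tmin; auto).
    destruct i1 as [t1 [ht1 e1]]. destruct i2 as [t2 [ht2 e2]].
    pose proof (hmin t1 ht1). pose proof (hmax t2 ht2).
    pose proof (G_pos tmax htmax).
    rewrite <- e1 in *. rewrite <- e2 in *.
    change (G tmin) with lam in H0.
    assert (/ G tmax * G tmax = 1) by (field; lra).
    assert (/ lam * lam = 1) by (field; lra).
    assert (lam * G tmax <= 1) by nra.
    assert (G tmax <= / lam) by nra.
    lra. }
  assert (hI : forall x, Iset x <-> lam <= x <= / lam).
  { intro x. split.
    - intros [t [ht ->]]. split; [apply hmin; auto|]. rewrite <- hmx. apply hmax; auto.
    - intros [h1 h2].
      destruct (Req_dec x lam) as [e|ne]; [exists tmin; split; auto|].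
      destruct (Req_dec x (/ lam)) as [e|ne']; [exists tmax; split; auto; rewrite hmx; auto|].
      assert (h1' : lam < x) by lra. assert (h2' : x < G tmax) by lra.
      destruct (Rtotal_order tmin tmax) as [hlt|[heq|hgt]].
      + destruct (Ranalysis5.IVT_interv (fun t => G t - x) tmin tmax) as [z [hz ez]]; auto.
        * intros c hcc. apply continuity_pt_minus; [apply hc; lra|apply continuity_pt_const; intros ? ?; auto].
        * fold lam. lra.
        * lra.
        * exists z. split; [lra|]. lra.
      + unfold lam in h1'. rewrite heq in h1'. lra.
      + destruct (Ranalysis5.IVT_interv (fun t => x - G t) tmax tmin) as [z [hz ez]]; auto.
        * intros c hcc. apply continuity_pt_minus; [apply continuity_pt_const; intros ? ?; auto|apply hc; lra].
        * lra.
        * fold lam. lra.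
        * exists z. split; [lra|]. lra. }
  exists lam. split; [split; auto|].
  - assert (hl : lam <= / lam) by (apply hI; exists tmin; auto).
    assert (/ lam * lam = 1) by (field; lra). nra.
  - split; [|split].
    + intro x. rewrite margins_Iset. apply hI.
    + intros mL mR nL nR. rewrite core. split.
      * intros [a [b [t [ht e]]]]. split; auto. split; auto. apply hI. exists t; auto.
      * intros [a [b c]]. split; auto. split; auto. apply hI in c. destruct c as [t [ht e]].
        exists t; auto.
    + destruct Hnum as [t [ht he]]. pose proof (hmin t ht). unfold lam. lra.
Qed.


Lemma step_encl p q u v pl ph ql qh xl xh ul uh vl vh :
  0 < pl -> 0 < ql -> 0 < xl -> xl <= xh -> pl <= p <= ph -> ql <= q <= qh -> 0 < u -> 0 < v ->
  step p q u v ->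
  xl*xl*(qh*qh) <= pl*(2*pl+ql)*(xl+2) ->
  ph*(2*ph+qh)*(xh+2) <= xh*xh*(ql*ql) ->
  ul * xh <= 2*pl+ql -> 2*ph+qh <= uh * xl ->
  vl*(xh*xh) <= 2*pl+ql -> 2*ph+qh <= vh*(xl*xl) ->
  (ul <= u <= uh) /\ (vl <= v <= vh).
Proof.
  intros hpl hql hxl hxlh [hp1 hp2] [hq1 hq2] hu hv [s1 s2] c1 c2 c3 c4 c5 c6.
  set (x := u / v).
  assert (hx : 0 < x) by (unfold x; apply Rdiv_lt_0_compat; auto).
  assert (eu : u = x * v) by (unfold x; field; lra).
  rewrite eu in s1, s2.
  assert (e1 : x * x * v = 2*p+q) by (apply Rmult_eq_reg_l with v; [nra|lra]).
  assert (e2 : p * (x + 2) * v = q * q) by nra.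
  (* f(x)=0 : x^2 q^2 = p(2p+q)(x+2) *)
  assert (ef : x*x*(q*q) = p*(2*p+q)*(x+2)).
  { rewrite <- e1. rewrite <- e2. ring. }
  assert (hK : p*(2*p+q) < x*(q*q)) by nra.
  assert (hqq : 0 < q*q) by nra.
  assert (hxl' : xl <= x).
  { destruct (Rle_or_lt xl x) as [|hlt]; auto. exfalso.
    assert (xl*xl*(q*q) <= xl*xl*(qh*qh)) by (apply Rmult_le_compat_l; nra).
    assert (pl*(2*pl+ql)*(xl+2) <= p*(2*p+q)*(xl+2)) by (apply Rmult_le_compat_r; nra).
    (* f(xl) <= 0 but xl > x gives f(xl) > 0 *)
    assert (xl*xl*(q*q) - p*(2*p+q)*(xl+2) > 0).
    { replace (xl*xl*(q*q) - p*(2*p+q)*(xl+2)) with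
        ((xl - x)*((xl+x)*(q*q) - p*(2*p+q)) + (x*x*(q*q) - p*(2*p+q)*(x+2))) by ring.
      rewrite ef. assert (0 < xl*(q*q)) by (apply Rmult_lt_0_compat; lra). assert ((xl+x)*(q*q) - p*(2*p+q) > 0) by nra. assert (0 < xl - x) by lra.
      assert (0 < (xl - x)*((xl+x)*(q*q) - p*(2*p+q))) by (apply Rmult_lt_0_compat; lra). lra. }
    lra. }
  assert (hxh : x <= xh).
  { destruct (Rle_or_lt x xh) as [|hlt]; auto. exfalso.
    assert (0 < xh) by lra.
    assert (xh*xh*(ql*ql) <= xh*xh*(q*q)) by (apply Rmult_le_compat_l; nra).
    assert (p*(2*p+q)*(xh+2) <= ph*(2*ph+qh)*(xh+2)) by (apply Rmult_le_compat_r; nra).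
    assert (xh*xh*(q*q) - p*(2*p+q)*(xh+2) < 0).
    { replace (xh*xh*(q*q) - p*(2*p+q)*(xh+2)) with
        ((xh - x)*((xh+x)*(q*q) - p*(2*p+q)) + (x*x*(q*q) - p*(2*p+q)*(x+2))) by ring.
      rewrite ef. assert (0 < xh*(q*q)) by (apply Rmult_lt_0_compat; lra). assert ((xh+x)*(q*q) - p*(2*p+q) > 0) by nra. assert (xh - x < 0) by lra.
      assert ((xh - x)*((xh+x)*(q*q) - p*(2*p+q)) < 0) by (apply Rmult_neg_pos; lra). lra. }
    lra. }
  assert (hA : 2*pl+ql <= 2*p+q) by lra.
  assert (hB : 2*p+q <= 2*ph+qh) by lra.
  rewrite eu. split; split.
  - assert (x*v*x = 2*p+q) by lra.
    destruct (Rle_or_lt ul (x*v)) as [|h]; auto. exfalso.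
    assert (ul*xh > x*v*x) by nra. lra.
  - assert (x*v*x = 2*p+q) by lra.
    destruct (Rle_or_lt (x*v) uh) as [|h]; auto. exfalso.
    assert (uh*xl < x*v*x) by nra. lra.
  - destruct (Rle_or_lt vl v) as [|h]; auto. exfalso.
    assert (x*x <= xh*xh) by nra.
    assert (v*(x*x) <= v*(xh*xh)) by (apply Rmult_le_compat_l; lra).
    assert (v*(xh*xh) < vl*(xh*xh)) by (apply Rmult_lt_compat_r; nra). lra.
  - destruct (Rle_or_lt v vh) as [|h]; auto. exfalso.
    assert (xl*xl <= x*x) by nra.
    assert (v*(xl*xl) <= v*(x*x)) by (apply Rmult_le_compat_l; lra).
    assert (vh*(xl*xl) < v*(xl*xl)) by (apply Rmult_lt_compat_r; nra). lra.
Qed.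


Definition ts : R := 2906/1000.

Lemma fwb1 : (157492915166484029/500000000000000000) <= oa ts 1 1 <= (78746457583242031/250000000000000000) /\ (145648962581546301/10000000000000000000) <= ob ts 1 1 <= (72824481290773181/5000000000000000000).
Proof.
  assert (hts : ts = 2906/1000) by reflexivity.
  assert (hp0 : 0 < ts) by lra. assert (hq0 : 0 < 1) by lra.
  destruct (orb_pos ts 1 1 hp0 hq0) as [hu hv].
  assert (B : (1453/500) <= oa ts 1 0 <= (1453/500) /\ 1 <= ob ts 1 0 <= 1)
    by (rewrite oa_0, ob_0; lra).
  destruct B as [B1 B2].
  apply (step_encl (oa ts 1 0) (ob ts 1 0) _ _ (1453/500) (1453/500) 1 1 (216263696458952083/10000000000000000) (3379120257171127/156250000000000));
    try lra; auto.
  apply orb_step; auto.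
Qed.

Lemma fwb2 : (84009621292797317/125000000000000000000) <= oa ts 1 2 <= (336038485171189831/500000000000000000000) /\ (700794158550400299/1000000000000000000000000) <= ob ts 1 2 <= (700794158550402497/1000000000000000000000000).
Proof.
  assert (hts : ts = 2906/1000) by reflexivity.
  assert (hp0 : 0 < ts) by lra. assert (hq0 : 0 < 1) by lra.
  destruct (orb_pos ts 1 2 hp0 hq0) as [hu hv].
  pose proof fwb1 as B.
  destruct B as [B1 B2].
  apply (step_encl (oa ts 1 1) (ob ts 1 1) _ _ (157492915166484029/500000000000000000) (78746457583242031/250000000000000000) (145648962581546301/10000000000000000000) (72824481290773181/5000000000000000000) (959021935531790769/1000000000000000) (959021935531792169/1000000000000000));
    try lra; auto.
  apply orb_step; auto.
Qed.

Lemma bwb1 : (348725486825524229/100000000000000000) <= oa 1 ts 1 <= (174362743412762151/50000000000000000) /\ (247879056587237817/100000000000000000) <= ob 1 ts 1 <= (1549244103670237/625000000000000).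
Proof.
  assert (hts : ts = 2906/1000) by reflexivity.
  assert (hp0 : 0 < 1) by lra. assert (hq0 : 0 < ts) by lra.
  destruct (orb_pos 1 ts 1 hp0 hq0) as [hu hv].
  assert (B : 1 <= oa 1 ts 0 <= 1 /\ (1453/500) <= ob 1 ts 0 <= (1453/500))
    by (rewrite oa_0, ob_0; lra).
  destruct B as [B1 B2].
  apply (step_encl (oa 1 ts 0) (ob 1 ts 0) _ _ 1 1 (1453/500) (1453/500) (140683723597598391/100000000000000000) (7034186179879921/5000000000000000));
    try lra; auto.
  apply orb_step; auto.
Qed.

Lemma bwb2 : (136675168886639781/100000000000000000) <= oa 1 ts 2 <= (136675168886639991/100000000000000000) /\ (197604023914091401/1000000000000000000) <= ob 1 ts 2 <= (39520804782818391/200000000000000000).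
Proof.
  assert (hts : ts = 2906/1000) by reflexivity.
  assert (hp0 : 0 < 1) by lra. assert (hq0 : 0 < ts) by lra.
  destruct (orb_pos 1 ts 2 hp0 hq0) as [hu hv].
  pose proof bwb1 as B.
  destruct B as [B1 B2].
  apply (step_encl (oa 1 ts 1) (ob 1 ts 1) _ _ (348725486825524229/100000000000000000) (174362743412762151/50000000000000000) (247879056587237817/100000000000000000) (1549244103670237/625000000000000) (172915467736197657/25000000000000000) (43228866934049469/6250000000000000));
    try lra; auto.
  apply orb_step; auto.
Qed.

Lemma bwb3 : (4380192588091897/156250000000000000) <= oa 1 ts 3 <= (280332325637884333/10000000000000000000) /\ (268110997070214247/1000000000000000000000) <= ob 1 ts 3 <= (268110997070219407/1000000000000000000000).
Proof.
  assert (hts : ts = 2906/1000) by reflexivity.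
  assert (hp0 : 0 < 1) by lra. assert (hq0 : 0 < ts) by lra.
  destruct (orb_pos 1 ts 3 hp0 hq0) as [hu hv].
  pose proof bwb2 as B.
  destruct B as [B1 B2].
  apply (step_encl (oa 1 ts 2) (ob 1 ts 2) _ _ (136675168886639781/100000000000000000) (136675168886639991/100000000000000000) (197604023914091401/1000000000000000000) (39520804782818391/200000000000000000) (104558309320100029/1000000000000000) (2091166186402019/20000000000000));
    try lra; auto.
  apply orb_step; auto.
Qed.

Lemma bwb4 : (64099782127116513/25000000000000000000000) <= oa 1 ts 4 <= (128199564254242011/50000000000000000000000) /\ (58348280596309729/500000000000000000000000000) <= ob 1 ts 4 <= (116696561192634593/1000000000000000000000000000).
Proof.
  assert (hts : ts = 2906/1000) by reflexivity.
  assert (hp0 : 0 < 1) by lra. assert (hq0 : 0 < ts) by lra.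
  destruct (orb_pos 1 ts 4 hp0 hq0) as [hu hv].
  pose proof bwb3 as B.
  destruct B as [B1 B2].
  apply (step_encl (oa 1 ts 3) (ob 1 ts 3) _ _ (4380192588091897/156250000000000000) (280332325637884333/10000000000000000000) (268110997070214247/1000000000000000000000) (268110997070219407/1000000000000000000000) (109857191115185527/5000000000000) (4394287644607683/200000000000));
    try lra; auto.
  apply orb_step; auto.
Qed.


Lemma series_split (f : nat -> R) K : ex_series f ->
  Series f = sum_f_R0 f K + Series (fun k => f (S K + k)%nat).
Proof. intro h. rewrite (Series_incr_n f (S K)) by (auto; lia). reflexivity. Qed.

Lemma series_tail_ge0 (f : nat -> R) K : ex_series f -> (forall k, 0 <= f k) ->
  sum_f_R0 f K <= Series f.
Proof.
  intros h hp. rewrite (series_split f K h).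
  assert (0 <= Series (fun k => f (S K + k)%nat)).
  { apply Series_ge0; [apply (proj1 (ex_series_incr_n f (S K))); auto|intro; auto]. }
  lra.
Qed.

Lemma series_tail_le (f : nat -> R) K B : ex_series f -> (forall k, 0 <= f k) ->
  (forall k, f (S K + k)%nat <= B * (/3)^k) ->
  Series f <= sum_f_R0 f K + B * (3/2).
Proof.
  intros h hp hb. rewrite (series_split f K h).
  assert (Series (fun k => f (S K + k)%nat) <= Series (fun k => B * (/3)^k)).
  { apply Series_le; [intro k; split; auto|].
    apply (ex_series_ext (fun k => scal B ((/3)^k))); [intro; reflexivity|].
    apply (@ex_series_scal_l R_AbsRing R_NormedModule).
    exists (/ (1 - /3)). apply is_series_geom. rewrite Rabs_pos_eq; lra. }
  rewrite Series_scal_l, Series_geom in H by (rewrite Rabs_pos_eq; lra).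
  replace (/ (1 - /3)) with (3/2) in H by field. lra.
Qed.

Lemma G_ts : 1 <= ts <= rho /\ G ts <= 999904 / 1000000.
Proof.
  pose proof rho_bounds.
  assert (hts : ts = 2906/1000) by reflexivity.
  assert (ht : 1/5 <= ts <= 5) by lra.
  split; [lra|].
  destruct (orbit_ex ts ht) as [e1 [e2 [e3 e4]]].
  pose proof (orbit_bounds ts ht) as B.
  destruct (mdiff_pos ts ht) as [hm hn].
  pose proof fwb1. pose proof fwb2. pose proof bwb1. pose proof bwb2. pose proof bwb3. pose proof bwb4.
  assert (L1 := series_tail_ge0 _ 2 e1 ltac:(intro k; destruct (B k) as [? [? _]]; lra)).
  assert (L2 := series_tail_ge0 _ 3 e2 ltac:(intro k; destruct (B (S k)) as [? [? [? [? _]]]]; lra)).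
  assert (U1 : Series (fun k => fa ts k + 2 * fb ts k) <= sum_f_R0 (fun k => fa ts k + 2 * fb ts k) 2 + ob ts 1 2 * (3/2)).
  { apply series_tail_le; [auto|intro k; destruct (B k) as [? [? _]]; lra|].
    intro k. destruct (orb_tail ts 1 ltac:(lra) ltac:(lra) 2 ltac:(lra) k) as [_ h].
    unfold fa, fb. replace (S 2 + k)%nat with (2 + 1 + k)%nat by lia. exact h. }
  assert (U2 : Series (fun k => ba ts (S k) + 2 * bb ts (S k)) <= sum_f_R0 (fun k => ba ts (S k) + 2 * bb ts (S k)) 3 + (2 * ob 1 ts 4) * (3/2)).
  { apply series_tail_le; [auto|intro k; destruct (B (S k)) as [? [? [? [? _]]]]; lra|].
    intro k. destruct (orb_tail 1 ts ltac:(lra) ltac:(lra) 4 ltac:(lra) k) as [_ h].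
    unfold ba, bb. replace (S (S 3 + k)) with (4 + 1 + k)%nat by lia.
    destruct (orb_pos 1 ts (4+1+k) ltac:(lra) ltac:(lra)).
    assert (0 < (/3)^k) by (apply pow_lt; lra). nra. }
  assert (s1 : sum_f_R0 (fun k => 2 * fa ts k + fb ts k) 2 =
     (2 * fa ts 0 + fb ts 0) + (2 * fa ts 1 + fb ts 1) + (2 * fa ts 2 + fb ts 2)) by reflexivity.
  assert (s2 : sum_f_R0 (fun k => 2 * ba ts (S k) + bb ts (S k)) 3 =
     (2 * ba ts 1 + bb ts 1) + (2 * ba ts 2 + bb ts 2) + (2 * ba ts 3 + bb ts 3) + (2 * ba ts 4 + bb ts 4)) by reflexivity.
  assert (s3 : sum_f_R0 (fun k => fa ts k + 2 * fb ts k) 2 =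
     (fa ts 0 + 2 * fb ts 0) + (fa ts 1 + 2 * fb ts 1) + (fa ts 2 + 2 * fb ts 2)) by reflexivity.
  assert (s4 : sum_f_R0 (fun k => ba ts (S k) + 2 * bb ts (S k)) 3 =
     (ba ts 1 + 2 * bb ts 1) + (ba ts 2 + 2 * bb ts 2) + (ba ts 3 + 2 * bb ts 3) + (ba ts 4 + 2 * bb ts 4)) by reflexivity.
  rewrite s1 in L1. rewrite s2 in L2. rewrite s3 in U1. rewrite s4 in U2.
  unfold fa, fb, ba, bb in *. rewrite oa_0, ob_0 in *.
  unfold G, mdiff, ndiff in *.
  apply Rmult_le_reg_r with (Series (fun k : nat => 2 * oa ts 1 k + ob ts 1 k) +
      Series (fun k : nat => 2 * ob 1 ts (S k) + oa 1 ts (S k))); [lra|].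
  unfold Rdiv. rewrite Rmult_assoc, Rinv_l, Rmult_1_r by lra.
  unfold fa, fb, ba, bb in *. lra.
Qed.


Theorem mainTheorem2 :
  exists lambda : R,
    0 < lambda <= 1 /\
    (forall x : R, mina_margins x <-> lambda <= x <= / lambda) /\
    (forall mL mR nL nR : R,
        realizable mL mR nL nR <->
        (mL < mR /\ nR < nL /\
         lambda <= mina_margin mL mR nL nR <= / lambda)) /\
    lambda <= 999904 / 1000000.
Proof.
  apply assemble. exists ts. exact G_ts.
Qed.
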